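(* For every integer $k\ge 1$ there exists a graph $G$ with $\operatorname{tw}(G)\le k$ and $\operatorname{box}(G)\ge k\left(1-\frac{2}{\sqrt{k}}\right)$.
   Context: The boxicity $\operatorname{box}(G)$ is the minimum $b$ such that $G$ is the intersection graph of axis-parallel boxes in $\mathbb{R}^b$ (products of $b$ closed intervals), one box per vertex. The treewidth $\operatorname{tw}(G)$ is the minimum, over all tree decompositions $(\{X_i\},T)$ of $G$ (a tree $T$ with vertex subsets $X_i$ at its nodes covering all vertices and all edges, such that for each vertex the nodes containing it form a connected subtree), of $\max_i|X_i|-1$. *)

(* Defs.v *)
From Stdlib Require Import Reals.
From mathcomp Require Import all_boot.

Set Implicit Arguments.
Unset Strict Implicit.
Unset Printing Implicit Defensive.

Definition simple_graph (T : finType) (e : rel T) : Prop :=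
  symmetric e /\ irreflexive e.

Definition box_representation (T : finType) (e : rel T) (b : nat) : Prop :=
  exists (l u : T -> nat -> R),
    (forall x i, (i < b)%N -> Rle (l x i) (u x i)) /\
    (forall x y, x <> y ->
       (e x y <-> exists p : nat -> R, forall i, (i < b)%N ->
          Rle (l x i) (p i) /\ Rle (p i) (u x i) /\
          Rle (l y i) (p i) /\ Rle (p i) (u y i))).

(* box(G) >= r : every box representation of G uses dimension at least r
   (box(G) is the minimum such dimension, which always exists for finite graphs). *)
Definition boxicity_ge (T : finType) (e : rel T) (r : R) : Prop :=
  forall b, box_representation e b -> Rle r (INR b).

Definition is_tree (I : finType) (t : rel I) : Prop :=
  [/\ symmetric t, irreflexive t,
      (forall i j, connect t i j) &
      (forall c : seq I, uniq c -> (2 < size c)%N -> ~~ cycle t c)].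

Definition tree_decomposition (T : finType) (e : rel T)
    (I : finType) (t : rel I) (X : I -> {set T}) : Prop :=
  [/\ is_tree t,
      (forall v : T, exists i, v \in X i),
      (forall v w : T, e v w -> exists i, (v \in X i) && (w \in X i)) &
      (forall v : T, forall i j, v \in X i -> v \in X j ->
         connect [rel a b | [&& t a b, v \in X a & v \in X b]] i j)].

Definition treewidth_le (T : finType) (e : rel T) (k : nat) : Prop :=
  exists (I : finType) (t : rel I) (X : I -> {set T}),
    tree_decomposition e t X /\ forall i, (#|X i| <= k.+1)%N.

(* Main.v *)
Require Import Defs.
From Stdlib Require Import Reals Lra Psatz Classical.
From mathcomp Require Import all_boot zify.
Set Implicit Arguments. Unset Strict Implicit. Unset Printing Implicit Defensive.

Definition Vt (n : nat) := ('I_n + ('I_n * {set 'I_n}))%type.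
Definition gE (n q : nat) : rel (Vt n) := fun v w =>
  match v, w with
  | inl a, inl b => a != b
  | inl a, inr p => a != p.1
  | inr p, inl a => p.1 != a
  | inr p, inr p' => [&& p.2 == p'.2, p.1 != p'.1, p.1 \in p.2, p'.1 \in p.2 & #|p.2| <= q]
  end.
Arguments gE : clear implicits.

Definition Rltb (a b : R) : bool := if Rlt_dec a b then true else false.
Lemma RltbP a b : reflect (Rlt a b) (Rltb a b).
Proof. rewrite /Rltb; case: Rlt_dec => h; by constructor. Qed.

Lemma gE_sym (n q : nat) : symmetric (gE n q).
Proof.
move=> [a|[x Z]] [b|[y W]] /=; try by rewrite eq_sym.
case: (eqVneq Z W) => [->|] /=; last by [].
by rewrite eq_sym; case: (x \in W); case: (y \in W); rewrite ?andbF.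
Qed.


Lemma adj_le (n q : nat) (b : nat) (l u : Vt n -> nat -> R)
  (Hiff : forall x y, x <> y -> (gE n q x y <-> exists p : nat -> R, forall i, (i < b)%N ->
          Rle (l x i) (p i) /\ Rle (p i) (u x i) /\ Rle (l y i) (p i) /\ Rle (p i) (u y i)))
  v w : v <> w -> gE n q v w -> forall i, (i < b)%N -> Rle (l v i) (u w i).
Proof.
move=> hvw hE i hi; have [p Hp] := (Hiff v w hvw).1 hE.
have := Hp i hi; lra.
Qed.

Lemma nadj_sep (n q : nat) (b : nat) (l u : Vt n -> nat -> R)
  (Hlu : forall x i, (i < b)%N -> Rle (l x i) (u x i))
  (Hiff : forall x y, x <> y -> (gE n q x y <-> exists p : nat -> R, forall i, (i < b)%N ->
          Rle (l x i) (p i) /\ Rle (p i) (u x i) /\ Rle (l y i) (p i) /\ Rle (p i) (u y i)))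
  v w : v <> w -> ~~ gE n q v w -> exists i, (i < b)%N /\ (Rlt (u v i) (l w i) \/ Rlt (u w i) (l v i)).
Proof.
move=> hvw hE; apply: NNPP => H.
move/negP: hE; apply; apply/(Hiff v w hvw).
exists (fun i => Rmax (l v i) (l w i)) => i hi.
have h1 : ~ Rlt (u v i) (l w i) by move=> h; apply: H; exists i; split => //; left.
have h2 : ~ Rlt (u w i) (l v i) by move=> h; apply: H; exists i; split => //; right.
have := Hlu v i hi; have := Hlu w i hi.
have := Rmax_l (l v i) (l w i); have := Rmax_r (l v i) (l w i).
have h1' := Rnot_lt_le _ _ h1; have h2' := Rnot_lt_le _ _ h2.
have := Rmax_lub (l v i) (l w i) (u v i); have := Rmax_lub (l v i) (l w i) (u w i).
lra.
Qed.

Definition delta (E D : finType) (F : D -> {set E}) (Y : {set E}) : {set D} :=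
  [set d | F d :&: Y != set0].
Definition inner2 (E D : finType) (F : D -> {set E}) (Z : {set E}) : {set D} :=
  [set d | (F d != set0) && (F d \subset Z)].
Definition innerY (E D : finType) (F : D -> {set E}) (Y Z : {set E}) : {set D} :=
  [set d | (F d :&: Z != set0) && (F d :&: (Y :\: Z) == set0)].

Lemma key_lemma (E D : finType) (F : D -> {set E}) (q : nat)
  (H3 : forall d x y z, x \in F d -> y \in F d -> z \in F d -> [|| x == y, x == z | y == z])
  (Hall : forall Z : {set E}, #|Z| <= q -> #|Z| <= #|delta F Z|) :
  forall Y : {set E}, q * #|Y| <= q.+1 * #|delta F Y|.
Proof.
move=> Y; have [m] := ubnP #|Y|; elim: m Y => // m IH Y ltYm.
have [->|[y0 y0Y]] := set_0Vmem Y; first by rewrite cards0 muln0.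
pose P (Z : {set E}) := [&& Z \subset Y, Z != set0, #|Z| <= q.+1 & #|Z| <= (#|inner2 F Z|).+1].
have P0 : P [set y0].
  by rewrite /P sub1set y0Y cards1 /=; apply/andP; split => //; apply/set0Pn; exists y0; rewrite inE.
case: (@arg_maxnP _ _ P (fun Z : {set E} => #|Z|) P0) => Z PZ maxZ.
case/and4P: PZ => sZY nZ0 leZq1 leZin.
have key : q * #|Z| <= q.+1 * #|innerY F Y Z|.
  case: (leqP #|Z| q) => hZ.
  - have closed : forall d, F d :&: Z != set0 -> F d :&: (Y :\: Z) == set0.
      move=> d /set0Pn [z]; rewrite inE => /andP [zF zZ].
      apply/negPn/negP => /set0Pn [y]; rewrite !inE => /and3P [yF yZ yY].
      pose W := y |: Z.
      have PW : P W.
        rewrite /P /W subUset sub1set yY sZY /=; apply/and3P; split.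
        - by apply/set0Pn; exists y; rewrite !inE eqxx.
        - by rewrite cardsU1 yZ.
        - have dn : d \notin inner2 F Z.
            by rewrite inE negb_and; apply/orP; right; apply/subsetPn; exists y.
          have sub : d |: inner2 F Z \subset inner2 F (y |: Z).
            apply/subsetP => d'; rewrite !inE => /orP [/eqP ->|/andP [h1 h2]].
            + apply/andP; split; first by apply/set0Pn; exists z.
              apply/subsetP => w wF; rewrite !inE.
              have := H3 d w z y wF zF yF.
              case/or3P => /eqP h.
              * by rewrite h zZ orbT.
              * by rewrite h eqxx.
              * by move: yZ; rewrite -h zZ.
            + rewrite h1 /=; apply: subset_trans h2 _; exact: subsetUr.
          have := subset_leq_card sub; rewrite cardsU1 dn cardsU1 yZ /=.
          move: leZin; lia.
      have := maxZ W PW; rewrite /W cardsU1 yZ; lia.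
    have sub : delta F Z \subset innerY F Y Z.
      apply/subsetP => d; rewrite !inE => h; by rewrite h closed.
    have := subset_leq_card sub; have := Hall Z hZ; nia.
  - have eZ : #|Z| = q.+1 by apply/eqP; rewrite eqn_leq leZq1 hZ.
    have sub : inner2 F Z \subset innerY F Y Z.
      apply/subsetP => d; rewrite !inE => /andP [h1 h2].
      apply/andP; split.
      + by move/setIidPl: h2 => ->.
      + apply/eqP/setP => w; rewrite !inE; apply/negP => /and3P [wF wZ _].
        by move/subsetP: h2 => /(_ w wF); rewrite (negbTE wZ).
    have := subset_leq_card sub; move: leZin; rewrite eZ; nia.
have cY : #|Y| = #|Z| + #|Y :\: Z|.
  by rewrite -(cardsID Z Y) (setIidPr sZY).
have Z0 : 0 < #|Z| by rewrite card_gt0.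
have IHY := IH (Y :\: Z) ltac:(lia).
have disj : delta F (Y :\: Z) :&: innerY F Y Z = set0.
  apply/setP => d; rewrite !inE; apply/negP => /andP [h1 /andP [_ /eqP h2]].
  by move: h1; rewrite h2 eqxx.
have sub : delta F (Y :\: Z) :|: innerY F Y Z \subset delta F Y.
  apply/subsetP => d; rewrite !inE => /orP [] h.
  - apply: contraNneq h => h; apply/eqP/setP => w; move/setP: h => /(_ w); rewrite !inE.
    by case: (w \in F d) => //=; case: (w \in Y); rewrite ?andbF.
  - case/andP: h => h _; apply: contraNneq h => h; apply/eqP/setP => w; move/setP: h => /(_ w); rewrite !inE.
    case wZ: (w \in Z); last by rewrite andbF.
    by rewrite (subsetP sZY w wZ).
have := subset_leq_card sub; have := cardsUI (delta F (Y :\: Z)) (innerY F Y Z).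
rewrite disj cards0 addn0 => ->.
move: key IHY; rewrite cY; nia.
Qed.

Lemma chain4 (a b c d : R) : Rlt a b -> Rle b c -> Rlt c d -> Rle d a -> False.
Proof. lra. Qed.

Lemma box_lb (n q b : nat) : box_representation (gE n q) b -> q * n <= q.+1 * b.
Proof.
case=> l [u [Hlu Hiff]].
have adj := adj_le Hiff.
have nadj := nadj_sep Hlu Hiff.
pose sR (d : 'I_b) (x : 'I_n) (Z : {set 'I_n}) := Rltb (u (inl x) d) (l (inr (x,Z)) d).
pose sL (d : 'I_b) (x : 'I_n) (Z : {set 'I_n}) := Rltb (u (inr (x,Z)) d) (l (inl x) d).
pose F (d : 'I_b) := [set x | [exists Z, sR d x Z || sL d x Z]].
have uniqR : forall d x y Z W, sR d x Z -> sR d y W -> x = y.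
  move=> d x y Z W /RltbP h1 /RltbP h2; apply/eqP; apply: contraT => hxy.
  have a1 := adj (inr (x,Z)) (inl y) ltac:(by []) hxy d (ltn_ord d).
  have hyx : y != x by rewrite eq_sym.
  have a2 := adj (inr (y,W)) (inl x) ltac:(by []) hyx d (ltn_ord d).
  case: (chain4 h1 a1 h2 a2).
have uniqL : forall d x y Z W, sL d x Z -> sL d y W -> x = y.
  move=> d x y Z W /RltbP h1 /RltbP h2; apply/eqP; apply: contraT => hxy.
  have hyx : y != x by rewrite eq_sym.
  have a1 := adj (inl y) (inr (x,Z)) ltac:(by []) hyx d (ltn_ord d).
  have a2 := adj (inl x) (inr (y,W)) ltac:(by []) hxy d (ltn_ord d).
  case: (chain4 h1 a2 h2 a1).
have mixed : forall (d : 'I_b) (x y : 'I_n) (Z : {set 'I_n}), x \in Z -> y \in Z -> #|Z| <= q -> x != y ->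
    sR d x Z -> sL d y Z -> False.
  move=> d x y Z xZ yZ hZ hxy /RltbP h1 /RltbP h2.
  have hne : (inr (x,Z) : Vt n) <> inr (y,Z).
    by case=> exy; move: hxy; rewrite exy eqxx.
  have hE : gE n q (inr (x,Z)) (inr (y,Z)) by rewrite /= eqxx hxy xZ yZ hZ.
  have a1 := adj _ _ hne hE d (ltn_ord d).
  have hyx : y != x by rewrite eq_sym.
  have a2 := adj (inl y) (inl x) ltac:(by case=> e; move: hyx; rewrite e eqxx) hyx d (ltn_ord d).
  case: (chain4 h1 a1 h2 a2).
have H3 : forall d x y z, x \in F d -> y \in F d -> z \in F d -> [|| x == y, x == z | y == z].
  move=> d x y z; rewrite !inE => /existsP [Z hx] /existsP [W hy] /existsP [V hz].
  case/orP: hx => hx; case/orP: hy => hy; case/orP: hz => hz;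
  first [ by rewrite (uniqR _ _ _ _ _ hx hy) eqxx
        | by rewrite (uniqR _ _ _ _ _ hx hz) eqxx !orbT
        | by rewrite (uniqR _ _ _ _ _ hy hz) eqxx !orbT
        | by rewrite (uniqL _ _ _ _ _ hx hy) eqxx
        | by rewrite (uniqL _ _ _ _ _ hx hz) eqxx !orbT
        | by rewrite (uniqL _ _ _ _ _ hy hz) eqxx !orbT ].
have Hall : forall Z : {set 'I_n}, #|Z| <= q -> #|Z| <= #|delta F Z|.
  move=> Z hZ.
  have sep : forall x, x \in Z -> exists d : 'I_b, sR d x Z || sL d x Z.
    move=> x xZ.
    have hne : (inr (x,Z) : Vt n) <> inl x by [].
    have hE : ~~ gE n q (inr (x,Z)) (inl x) by rewrite /= eqxx.
    have [i [hi hs]] := nadj _ _ hne hE.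
    exists (Ordinal hi); case: hs => h; apply/orP; [right|left]; apply/RltbP; exact h.
  case: (set_0Vmem Z) => [->|[x0 x0Z]]; first by rewrite cards0.
  have [d0 _] := sep x0 x0Z.
  pose phi x := odflt d0 [pick d | sR d x Z || sL d x Z].
  have phiP : forall x, x \in Z -> sR (phi x) x Z || sL (phi x) x Z.
    move=> x xZ; rewrite /phi; case: pickP => [d hd|H] //=.
    have [d hd] := sep x xZ; by move: (H d); rewrite hd.
  have inj : {in Z &, injective phi}.
    move=> x y xZ yZ he; apply/eqP; apply: contraT => hxy.
    have := phiP x xZ; have := phiP y yZ; rewrite -he.
    case/orP => hy; case/orP => hx.
    - by move: hxy; rewrite (uniqR _ _ _ _ _ hx hy) eqxx.
    - case: (mixed _ y x Z yZ xZ hZ ltac:(by rewrite eq_sym) hy hx).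
    - case: (mixed _ x y Z xZ yZ hZ hxy hx hy).
    - by move: hxy; rewrite (uniqL _ _ _ _ _ hx hy) eqxx.
  rewrite -(card_in_imset inj); apply: subset_leq_card; apply/subsetP => d /imsetP [x xZ ->].
  rewrite inE; apply/set0Pn; exists x; rewrite !inE xZ andbT; apply/existsP; exists Z; exact: phiP.
have := key_lemma H3 Hall setT; rewrite cardsT card_ord => h.
apply: leq_trans h _; rewrite leq_mul2l; apply/orP; right.
by apply: leq_trans (max_card _) _; rewrite card_ord.
Qed.

Definition Ind (n : nat) := option ({set 'I_n} + ('I_n * {set 'I_n}))%type.
Definition tT (n : nat) : rel (Ind n) := fun a b => (a == None) != (b == None).
Arguments tT : clear implicits.
Definition CS (n : nat) : {set Vt n} := inl @: [set: 'I_n].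
Definition validp (n q : nat) (p : 'I_n * {set 'I_n}) := (p.1 \in p.2) && (#|p.2| <= q).
Arguments validp : clear implicits.
Definition bag (n q : nat) (i : Ind n) : {set Vt n} :=
  match i with
  | None => CS n
  | Some (inl Z) => CS n :|: (if #|Z| <= q then [set (inr (x, Z) : Vt n) | x in Z] else set0)
  | Some (inr p) => CS n :|: (if validp n q p then set0 else [set (inr p : Vt n)])
  end.
Arguments bag : clear implicits.
Definition canon (n q : nat) (p : 'I_n * {set 'I_n}) : Ind n :=
  if validp n q p then Some (inl p.2) else Some (inr p).
Arguments canon : clear implicits.

Lemma inl_CS (n : nat) (c : 'I_n) : (inl c : Vt n) \in CS n.
Proof. by apply/imsetP; exists c; rewrite ?inE. Qed.

Lemma inr_CS (n : nat) p : (inr p : Vt n) \notin CS n.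
Proof. by apply/imsetP => -[c _]. Qed.

Lemma inl_bag (n q : nat) (c : 'I_n) i : (inl c : Vt n) \in bag n q i.
Proof. by case: i => [[Z|p]|] /=; rewrite ?in_setU inl_CS. Qed.

Lemma inr_bag (n q : nat) p i : (inr p : Vt n) \in bag n q i -> i = canon n q p.
Proof.
case: i => [[Z|p']|] /=; rewrite ?in_setU (negbTE (inr_CS p)) //=.
- case: ifP => hZ; last by rewrite inE.
  case/imsetP => x xZ [->]; by rewrite /canon /validp /= xZ hZ.
- case: ifP => hv; first by rewrite inE.
  rewrite inE => /eqP [->]; by rewrite /canon hv.
Qed.

Lemma inr_bag_canon (n q : nat) p : (inr p : Vt n) \in bag n q (canon n q p).
Proof.
rewrite /canon; case: ifP => hv /=; rewrite in_setU.
- move: hv; rewrite /validp => /andP [h1 h2]; rewrite h2; apply/orP; right.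
  by apply/imsetP; exists p.1 => //; case: p {h1 h2}.
- by rewrite hv inE eqxx ?orbT.
Qed.

Lemma cardU_le (T : finType) (A B : {set T}) : #|A :|: B| <= #|A| + #|B|.
Proof. by rewrite cardsU leq_subr. Qed.

Lemma card_CS (n : nat) : #|CS n| <= n.
Proof. by apply: leq_trans (leq_imset_card _ _) _; rewrite cardsT card_ord. Qed.

Lemma card_bag (n q : nat) i : 0 < q -> #|bag n q i| <= n + q.
Proof.
move=> q0; case: i => [[Z|p]|] /=.
- apply: leq_trans (cardU_le _ _) _; apply: leq_add; first exact: card_CS.
  case: ifP => hZ; last by rewrite cards0.
  by apply: leq_trans (leq_imset_card _ _) hZ.
- apply: leq_trans (cardU_le _ _) _; apply: leq_add; first exact: card_CS.
  by case: ifP => _; rewrite ?cards0 ?cards1.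
- by apply: leq_trans (card_CS n) _; apply: leq_addr.
Qed.

Lemma tT_connect (n : nat) (i j : Ind n) : connect (tT n) i j.
Proof.
have toN : forall i, connect (tT n) i None.
  by case=> [a|]; [apply: connect1 | apply: connect0].
have fromN : forall i, connect (tT n) None i.
  by case=> [a|]; [apply: connect1 | apply: connect0].
exact: connect_trans (toN i) (fromN j).
Qed.

Lemma tT_acyclic (n : nat) (c : seq (Ind n)) : uniq c -> 2 < size c -> ~~ cycle (tT n) c.
Proof.
case: c => [|x1 [|x2 [|x3 r]]] //= Hu _.
have sN : forall a, (Some a == None :> Ind n) = false by [].
rewrite /tT; case: x1 Hu => [a1|] Hu; case: x2 Hu => [a2|] Hu; case: x3 Hu => [a3|] Hu; rewrite ?sN ?eqxx //=.
all: try by move: Hu; rewrite !inE ?eqxx ?orbT.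
case: r Hu => [|[y|] r] Hu; rewrite /= ?sN ?eqxx //=.
by move: Hu; rewrite !inE ?eqxx ?orbT ?andbF.
Qed.

Lemma tw_lemma (n q k : nat) : 0 < q -> n + q = k.+1 -> treewidth_le (gE n q) k.
Proof.
move=> q0 hk.
exists (Ind n), (tT n), (bag n q); split; last first.
  by move=> i; rewrite -hk; apply: card_bag.
split.
- split.
  + by move=> a b; rewrite /tT; case: (a == None); case: (b == None).
  + by move=> a; rewrite /tT eqxx.
  + exact: tT_connect.
  + exact: tT_acyclic.
- case=> [c|p]; first by exists None; apply: inl_bag.
  by exists (canon n q p); apply: inr_bag_canon.
- case=> [a|p] [a'|p'] /= H.
  + by exists None; rewrite !inl_bag.
  + by exists (canon n q p'); rewrite inl_bag inr_bag_canon.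
  + by exists (canon n q p); rewrite inl_bag inr_bag_canon.
  + case/and5P: H => /eqP e2 _ h1 h2 hq.
    exists (Some (inl p.2)); rewrite /= !in_setU hq; apply/andP; split; apply/orP; right.
    * by apply/imsetP; exists p.1 => //; case: p {e2 h1 h2 hq}.
    * apply/imsetP; exists p'.1 => //; rewrite e2; by case: p' {e2 h1 h2 hq}.
- case=> [c|p] i j hi hj.
  + have toN : forall i, connect [rel a b | [&& tT n a b, (inl c : Vt n) \in bag n q a & (inl c : Vt n) \in bag n q b]] i None.
      case=> [a|]; last exact: connect0.
      by apply: connect1; apply/and3P; split; [done | exact: inl_bag | exact: inl_bag].
    have fromN : forall i, connect [rel a b | [&& tT n a b, (inl c : Vt n) \in bag n q a & (inl c : Vt n) \in bag n q b]] None i.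
      case=> [a|]; last exact: connect0.
      by apply: connect1; apply/and3P; split; [done | exact: inl_bag | exact: inl_bag].
    exact: connect_trans (toN i) (fromN j).
  + by rewrite (inr_bag hi) (inr_bag hj); apply: connect0.
Qed.

Open Scope R_scope.
Lemma real_part_R (K Q N B : R) : (1 <= K) -> (Q*Q <= K) -> (K < (Q+1)*(Q+1)) -> (0 <= Q) ->
  (N + Q = K + 1) -> (Q * N <= (Q+1) * B) -> (K * (1 - 2 / sqrt K) <= B).
Proof.
intros hK h1 h2 hQ hN hB.
assert (hs : (sqrt K * sqrt K = K)) by (apply sqrt_sqrt; lra).
assert (hs0 : (0 < sqrt K)) by (apply sqrt_lt_R0; lra).
set (s := sqrt K) in *.
replace (K * (1 - 2 / s)) with (K - 2 * s) by (rewrite <- hs; field; lra).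
assert (Q <= s) by nra.
assert (s < Q + 1) by nra.
assert ((Q+1-s)*(Q+1-s) <= 1) by nra.
assert ((Q+1) * (K - 2*s) <= Q * N) by nra.
nra.
Qed.
Close Scope R_scope.


Theorem theorem3 :
  forall k : nat, (1 <= k)%N ->
    exists (T : finType) (e : rel T),
      simple_graph e /\ treewidth_le e k /\
      boxicity_ge e (Rmult (INR k) (Rminus 1 (Rdiv 2 (sqrt (INR k))))).
Proof.
move=> k hk.
pose q := Nat.sqrt k.
have [h1 h2] := Nat.sqrt_spec k (Nat.le_0_l k).
rewrite -/q in h1 h2.
have q0 : 0 < q by apply/ltP; lia.
have qk : q <= k.+1 by apply/leP; nia.
pose n := k.+1 - q.
have hnq : n + q = k.+1 by rewrite /n subnK.
exists (Vt n), (gE n q); split; last split.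
- split; first exact: gE_sym.
  by move=> [a|[x Z]] /=; rewrite ?eqxx ?andbF.
- exact: tw_lemma.
- move=> b hb; have hb' := box_lb hb.
  apply: (real_part_R (Q := INR q) (N := INR n)).
  + have := le_INR 1 k (elimT leP hk); by [].
  + rewrite -mult_INR; apply: le_INR; exact: h1.
  + rewrite -S_INR -mult_INR; apply: lt_INR; exact: h2.
  + exact: pos_INR.
  + rewrite -S_INR -plus_INR; congr INR; move: hnq; lia.
  + rewrite -S_INR -!mult_INR; apply: le_INR; apply/leP; exact: hb'.
Qed.
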